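(* Let $\mathcal{T}_0$ be a triangulation of a finite point set $\mathcal{P}$ in the plane and let $F=\langle f_1,\ldots,f_r\rangle$ be a valid sequence of flips with $\mathcal{T}_0 \xrightarrow{F} \mathcal{T}_r$. For any ordering $(C_1,\ldots,C_\ell)$ of the (weakly connected) components of $\mathcal{D}_F$, there is a permutation $\pi(F)$ of the flips in $F$ such that $\mathcal{T}_0 \xrightarrow{\pi(F)} \mathcal{T}_r$ and such that for any flips $f_i\in C_t$ and $f_j\in C_s$ with $1\le t<s\le \ell$, $f_i$ appears before $f_j$ in $\pi(F)$. That is, the flips of each component appear as a consecutive block in $\pi(F)$, and the blocks appear in the given order of their components.
   Context: A triangulation of a finite point set $\mathcal{P}$ in the plane is a partition of the convex hull of $\mathcal{P}$ into triangles whose vertex set is $\mathcal{P}$. For an interior edge $e$ of a triangulation $\mathcal{T}$, the quadrilateral associated with $e$ is the union of the two triangles of $\mathcal{T}$ sharing $e$. A flip $f$ with underlying edge $\epsilon(f)=e$ is admissible in $\mathcal{T}$ if $e\in\mathcal{T}$ and its associated quadrilateral is convex; performing it replaces $e$ by the other diagonal $\phi(f)$ of that quadrilateral. Two distinct edges share a triangle in $\mathcal{T}$ if they are edges of the same triangle of $\mathcal{T}$. A sequence $F=\langle f_1,\ldots,f_r\rangle$ is valid with respect to $\mathcal{T}$ if there are triangulations $\mathcal{T}_0=\mathcal{T},\mathcal{T}_1,\ldots,\mathcal{T}_r$ such that $f_i$ is admissible in $\mathcal{T}_{i-1}$ and performing it yields $\mathcal{T}_i$; then we write $\mathcal{T}\xrightarrow{F}\mathcal{T}_r$.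 Flips in a sequence are distinct objects even if they have the same underlying edge. For $1\le i<j\le r$, flip $f_j$ is adjacent to $f_i$ (written $f_i\to f_j$) if (1) either $\phi(f_i)=\epsilon(f_j)$ or $\phi(f_i)$ and $\epsilon(f_j)$ share a triangle in $\mathcal{T}_{j-1}$, and (2) there is no $p$ with $i<p<j$ and $\epsilon(f_p)=\phi(f_i)$. $\mathcal{D}_F$ is the directed acyclic graph whose nodes are the flips of $F$ and whose arcs are the pairs $f_i\to f_j$. A component of a directed graph means a weakly connected component (connected component of the underlying undirected graph). *)

(* Defs.v *)
From mathcomp Require Import all_boot all_order all_fingroup all_algebra.
Set Implicit Arguments. Unset Strict Implicit. Unset Printing Implicit Defensive.
Import Order.TTheory GRing.Theory Num.Theory.
Local Open Scope ring_scope.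

Section Geometry.
Variable R : realFieldType.
Variable n : nat.
(* the point set P = { p i | i < n }, p injective *)
Variable p : 'I_n -> R * R.

Definition orient (a b c : R * R) : R :=
  (b.1 - a.1) * (c.2 - a.2) - (b.2 - a.2) * (c.1 - a.1).

Definition nondeg (t : {set 'I_n}) : Prop :=
  exists a b c, t = [set a; b; c] /\ orient (p a) (p b) (p c) != 0.

Definition in_tri_closed (t : {set 'I_n}) (q : R * R) : Prop :=
  exists a b c, t = [set a; b; c] /\
    let s := orient (p a) (p b) (p c) in
    [/\ s != 0, 0 <= orient (p a) (p b) q * s,
        0 <= orient (p b) (p c) q * s & 0 <= orient (p c) (p a) q * s].

Definition in_tri_open (t : {set 'I_n}) (q : R * R) : Prop :=
  exists a b c, t = [set a; b; c] /\
    let s := orient (p a) (p b) (p c) in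
    [/\ s != 0, 0 < orient (p a) (p b) q * s,
        0 < orient (p b) (p c) q * s & 0 < orient (p c) (p a) q * s].

Definition in_hull (q : R * R) : Prop :=
  exists w : 'I_n -> R, [/\ forall i, 0 <= w i, \sum_i w i = 1 &
    q = (\sum_i w i * (p i).1, \sum_i w i * (p i).2)].

(* T is a triangulation of P: non-degenerate triangles with vertices in P,
   pairwise disjoint interiors, covering exactly conv(P), and no point of P
   lies in a triangle except at its vertices (so the vertex set is P and the
   triangles meet face-to-face). *)
Definition triangulation (T : {set {set 'I_n}}) : Prop :=
  [/\ forall t, t \in T -> nondeg t,
      forall t1 t2, t1 \in T -> t2 \in T -> t1 != t2 ->
        forall q, ~ (in_tri_open t1 q /\ in_tri_open t2 q),
      forall q, in_hull q <-> exists2 t, t \in T & in_tri_closed t q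
    & forall t i, t \in T -> in_tri_closed t (p i) -> i \in t].

Definition is_edge (T : {set {set 'I_n}}) (e : {set 'I_n}) : bool :=
  (#|e| == 2)%N && [exists t in T, e \subset t].

Definition share_tri (T : {set {set 'I_n}}) (e1 e2 : {set 'I_n}) : bool :=
  [&& e1 != e2, is_edge T e1, is_edge T e2 &
      [exists t in T, (e1 \subset t) && (e2 \subset t)]].

(* the quadrilateral with diagonals e and e' is (strictly) convex:
   the two diagonals cross at a point interior to both *)
Definition convex_quad (e e' : {set 'I_n}) : Prop :=
  exists a b c d, [/\ e = [set a; b], e' = [set c; d],
    orient (p a) (p b) (p c) * orient (p a) (p b) (p d) < 0 &
    orient (p c) (p d) (p a) * orient (p c) (p d) (p b) < 0].

(* a flip f = (epsilon f, phi f): underlying edge and the new diagonal *)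
Definition flip := ({set 'I_n} * {set 'I_n})%type.
Definition flip0 : flip := (set0, set0).

Definition admissible (T : {set {set 'I_n}}) (f : flip) : Prop :=
  [/\ is_edge T f.1 /\ #|[set t in T | f.1 \subset t]| = 2%N,
      #|f.2| = 2%N, [disjoint f.1 & f.2],
      forall x, x \in f.2 -> f.1 :|: [set x] \in T
    & convex_quad f.1 f.2].

Definition perform (T : {set {set 'I_n}}) (f : flip) : {set {set 'I_n}} :=
  [set t in T | ~~ (f.1 \subset t)] :|: [set f.2 :|: [set x] | x in f.1].

(* T_k : the triangulation after the first k flips of F *)
Definition trs (T0 : {set {set 'I_n}}) (F : seq flip) (k : nat) :=
  foldl perform T0 (take k F).

Definition valid (T0 : {set {set 'I_n}}) (F : seq flip) : Prop :=
  (forall k, (k < size F)%N ->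
     triangulation (trs T0 F k) /\ admissible (trs T0 F k) (nth flip0 F k))
  /\ triangulation (trs T0 F (size F)).

(* arcs of D_F (0-indexed: flip j is performed in trs T0 F j = T_{j-1}) *)
Definition adj (T0 : {set {set 'I_n}}) (F : seq flip) (i j : 'I_(size F)) : bool :=
  let phi_i := (nth flip0 F i).2 in
  let eps_j := (nth flip0 F j).1 in
  [&& (i < j)%N,
      (phi_i == eps_j) || share_tri (trs T0 F j) phi_i eps_j &
      [forall k : 'I_(size F), ((i < k)%N && (k < j)%N) ==> ((nth flip0 F k).1 != phi_i)]].

Definition wadj (T0 : {set {set 'I_n}}) (F : seq flip) : rel 'I_(size F) :=
  fun i j => adj T0 i j || adj T0 j i.

Definition component (T0 : {set {set 'I_n}}) (F : seq flip) (i : 'I_(size F))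
  : {set 'I_(size F)} := [set j | connect (wadj T0 (F:=F)) i j].

Definition components (T0 : {set {set 'I_n}}) (F : seq flip)
  : {set {set 'I_(size F)}} := [set component T0 i | i : 'I_(size F)].

(* the sequence of flips F permuted: position k of the new sequence holds the
   flip f_{s^-1 k}, i.e. flip f_i is moved to position s i *)
Definition permute_flips (F : seq flip) (s : {perm 'I_(size F)}) : seq flip :=
  [seq nth flip0 F ((s^-1)%g k) | k <- enum 'I_(size F)].

End Geometry.

(* Main.v *)
Require Import Defs.
From mathcomp Require Import all_boot all_order all_fingroup all_algebra.
From mathcomp Require Import ring lra zify.
Set Implicit Arguments. Unset Strict Implicit. Unset Printing Implicit Defensive.
Import Order.TTheory GRing.Theory Num.Theory.
Local Open Scope ring_scope.

Section Raw.
Variable R : realFieldType.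
Implicit Types (a b c d q x y z u v : R * R).

Lemma orient_rot a b c : orient a b c = orient b c a.
Proof. rewrite /orient; ring. Qed.
Lemma orient_swap a b c : orient b a c = - orient a b c.
Proof. rewrite /orient; ring. Qed.
Lemma orient_swap2 a b c : orient a c b = - orient a b c.
Proof. rewrite /orient; ring. Qed.
Lemma orient_aa a c : orient a a c = 0.
Proof. rewrite /orient; ring. Qed.
Lemma orient_aa2 a c : orient a c a = 0.
Proof. rewrite /orient; ring. Qed.
Lemma orient_aa3 a c : orient c a a = 0.
Proof. rewrite /orient; ring. Qed.

Definition triR (r : R -> bool) a b c q : Prop :=
  let s := orient a b c in
  [/\ s != 0, r (orient a b q * s), r (orient b c q * s) & r (orient c a q * s)].

Lemma triR_rot r a b c q : triR r a b c q -> triR r b c a q.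
Proof.
rewrite /triR /= => -[H0 H1 H2 H3]; rewrite -(orient_rot a b c); by split.
Qed.

Lemma triR_swap r a b c q : triR r a b c q -> triR r b a c q.
Proof.
rewrite /triR /= => -[H0 H1 H2 H3]; split.
- by rewrite orient_swap oppr_eq0.
- by have -> : orient b a q * orient b a c = orient a b q * orient a b c by rewrite /orient; ring.
- by have -> : orient a c q * orient b a c = orient c a q * orient a b c by rewrite /orient; ring.
- by have -> : orient c b q * orient b a c = orient b c q * orient a b c by rewrite /orient; ring.
Qed.

Lemma triR_all r a b c q : triR r a b c q ->
  [/\ triR r b c a q, triR r c a b q, triR r b a c q, triR r a c b q & triR r c b a q].
Proof.
move=> H; have H1 := triR_rot H; have H2 := triR_rot H1.
by split => //; apply: triR_swap.
Qed.

Lemma triR_ne r a b c q : triR r a b c q -> [/\ a != b, b != c & c != a].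
Proof.
case=> H _ _ _; split; apply/eqP=> E; move: H; rewrite E.
- by rewrite orient_aa eqxx.
- by rewrite orient_aa3 eqxx.
- by rewrite orient_aa2 eqxx.
Qed.

Lemma bary a b c q x y : orient x y q * orient a b c =
  orient b c q * orient x y a + orient c a q * orient x y b + orient a b q * orient x y c.
Proof. rewrite /orient; ring. Qed.

Lemma sign_lemma (R1 R2 S1 S2 : R) : R2 - R1 + S2 - S1 = 0 -> R1 * R2 < 0 -> S1 * S2 < 0 -> R1 * S1 < 0.
Proof.
move=> E H1 H2.
have [R1p|R1n|R10] := ltrgtP 0 R1; last by move: H1; rewrite -R10 mul0r ltxx.
- have R2n : R2 < 0 by rewrite -(pmulr_rlt0 _ R1p).
  have [S1n|S1p] := ltP S1 0; first by rewrite pmulr_rlt0.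
  have S2p : 0 < S2 by lra.
  have : 0 <= S1 * S2 by rewrite mulr_ge0 // ltW.
  by rewrite leNgt H2.
- have R2p : 0 < R2 by rewrite -(nmulr_rlt0 _ R1n).
  have [S1n|S1p] := ltP 0 S1; first by rewrite nmulr_rlt0.
  have S2n : S2 < 0 by lra.
  have : 0 <= S1 * S2 by rewrite mulr_le0 // ltW.
  by rewrite leNgt H2.
Qed.

Definition le0 (x : R) := 0 <= x.
Definition lt0 (x : R) := 0 < x.

Lemma div_sq (X Y : R) : Y != 0 -> 0 <= X * (Y * Y) -> 0 <= X.
Proof.
move=> HY H; have HY2 : 0 < Y * Y by rewrite -expr2 exprn_even_gt0 //.
by rewrite -(pmulr_lge0 _ HY2).
Qed.

Lemma quad_cover a b c d q :
  orient a b c * orient a b d < 0 -> orient c d a * orient c d b < 0 ->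
  triR le0 c d a q -> triR le0 a b c q \/ triR le0 a b d q.
Proof.
move=> H1 H2 [H0 Ha Hb Hc]; rewrite /le0 in Ha Hb Hc.
set S1 := orient a b c in H1 *; set S2 := orient a b d in H1 *.
set R1 := orient c d a in H2 H0 Ha Hb Hc *.
set R2 := orient c d b in H2 *.
have E : R2 - R1 + S2 - S1 = 0 by rewrite /R1 /R2 /S1 /S2 /orient; ring.
have RS1 : R1 * S1 < 0 by apply: sign_lemma E H2 H1.
have RS2 : R2 * S2 < 0.
  apply: (@sign_lemma R2 R1 S2 S1); [lra | by rewrite mulrC | by rewrite mulrC].
have S10 : S1 != 0 by apply/eqP=> E0; move: H1; rewrite E0 mul0r ltxx.
have S20 : S2 != 0 by apply/eqP=> E0; move: H1; rewrite E0 mulr0 ltxx.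
have R2S1 : 0 <= R2 * S1.
  have : 0 < (R1 * R2) * (R1 * S1) by rewrite nmulr_rgt0.
  have: 0 < R1 * R1 by rewrite -expr2 exprn_even_gt0 //.
  move=> HR; rewrite (_ : (R1 * R2) * (R1 * S1) = (R2 * S1) * (R1 * R1)); last by ring.
  by rewrite (pmulr_lgt0 _ HR) => /ltW.
have R1S2 : 0 <= R1 * S2.
  have : 0 < (R1 * R2) * (R2 * S2) by rewrite nmulr_rgt0.
  have: 0 < R2 * R2 by rewrite -expr2 exprn_even_gt0 //; apply/eqP=> E0; move: H2; rewrite E0 mulr0 ltxx.
  move=> HR; rewrite (_ : (R1 * R2) * (R2 * S2) = (R1 * S2) * (R2 * R2)); last by ring.
  by rewrite (pmulr_lgt0 _ HR) => /ltW.
have [Hq|Hq] := leP 0 (orient a b q * S1).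
- left; split => //; rewrite /le0 //; apply: (div_sq H0).
  + rewrite (_ : orient b c q * S1 * (R1 * R1) =
       (orient a c q * R1) * (R2 * S1) + (orient c d q * R1) * (S1 * S1)); last first.
      by rewrite /S1 /R1 /R2 /orient; ring.
    by apply: addr_ge0; apply: mulr_ge0 => //; rewrite -expr2 sqr_ge0.
  + rewrite (_ : orient c a q * S1 * (R1 * R1) = (orient a c q * R1) * - (R1 * S1)); last first.
      by rewrite /S1 /R1 /orient; ring.
    by apply: mulr_ge0 => //; rewrite oppr_ge0 ltW.
- right; split => //; rewrite /le0 //; apply: (div_sq S10).
  + rewrite (_ : orient a b q * S2 * (S1 * S1) = - (orient a b q * S1) * - (S1 * S2)); last first.
      by rewrite /S1 /S2; ring.
    by apply: mulr_ge0; rewrite oppr_ge0 ltW.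
  + apply: (div_sq H0).
    rewrite (_ : orient b d q * S2 * (S1 * S1) * (R1 * R1) =
       ((orient d a q * R1) * - (R2 * S2) + (orient c d q * R1) * (S2 * S2)) * (S1 * S1)); last first.
      by rewrite /S1 /S2 /R1 /R2 /orient; ring.
    apply: mulr_ge0; last by rewrite -expr2 sqr_ge0.
    apply: addr_ge0; apply: mulr_ge0 => //; first by rewrite oppr_ge0 ltW.
    by rewrite -expr2 sqr_ge0.
  + apply: (div_sq H0).
    rewrite (_ : orient d a q * S2 * (S1 * S1) * (R1 * R1) =
       ((orient d a q * R1) * (R1 * S2)) * (S1 * S1)); last first.
      by rewrite /S1 /S2 /R1 /R2 /orient; ring.
    apply: mulr_ge0; last by rewrite -expr2 sqr_ge0.
    by apply: mulr_ge0.
Qed.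
End Raw.
Arguments le0 {R}.
Arguments lt0 {R}.
Section Raw2.
Variable R : realFieldType.
Implicit Types (a b c d q x y z u v : R * R).

Lemma small_aux (A K t d: R) : 0 < A -> d * (`|K| + 1) = A -> 0 < d -> 0 <= t -> t <= d -> 0 < A + t * K.
Proof. move=> *. have := ler_norm (- K); rewrite normrN => ?. have := normr_ge0 K. nra. Qed.

Lemma interp_pos (A K t t0 : R) : 0 < A -> 0 < A + t0 * K -> 0 < t0 -> 0 <= t -> t <= t0 -> 0 < A + t * K.
Proof.
move=> HA H0 Ht0 Ht Htt.
have E : t0 * (A + t * K) = (t0 - t) * A + t * (A + t0 * K) by ring.
have : 0 < t0 * (A + t * K).
  rewrite E; have [->|tp] := eqVneq t 0; first by rewrite subr0 mul0r addr0 mulr_gt0.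
  apply: ltr_wpDl; first by rewrite mulr_ge0 // ?subr_ge0 // ltW.
  by rewrite mulr_gt0 // lt0r tp.
by rewrite pmulr_rgt0.
Qed.

Lemma small_t (l : seq (R * R)) : all (fun AK => 0 < AK.1) l ->
  exists t : R, [/\ 0 < t, t <= 1 & all (fun AK => 0 < AK.1 + t * AK.2) l].
Proof.
elim: l => [|[A K] l IH] /=; first by move=> _; exists 1; split; rewrite ?ltr01.
case/andP=> HA Hall; have [t0 [t0p t01 Hl]] := IH Hall.
set d := A / (`|K| + 1).
have dp : 0 < d by rewrite divr_gt0 // ltr_wpDl.
have dE : d * (`|K| + 1) = A by rewrite /d mulfVK // lt0r_neq0 // ltr_wpDl.
exists (Num.min t0 d); split.
- by rewrite lt_min t0p dp.
- by rewrite ge_min t01.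
- have tle0 : Num.min t0 d <= t0 by rewrite ge_min lexx.
  have tled : Num.min t0 d <= d by rewrite ge_min lexx orbT.
  have tp : 0 <= Num.min t0 d by rewrite le_min !ltW.
  apply/andP; split.
  + exact: (small_aux HA dE dp tp tled).
  + apply/allP => -[A' K'] HI; have /= H := allP Hl _ HI.
    have /= HA' := allP Hall _ HI.
    exact: (interp_pos HA' H t0p tp tle0).
Qed.

Definition combo q g (t : R) := ((1 - t) * q.1 + t * g.1, (1 - t) * q.2 + t * g.2).
Lemma orient_combo x y q g t : orient x y (combo q g t) = (1 - t) * orient x y q + t * orient x y g.
Proof. rewrite /orient /combo /=; ring. Qed.

Lemma perturb a b c x y z q : triR le0 a b c q -> triR lt0 x y z q ->
  exists q', triR lt0 a b c q' /\ triR lt0 x y z q'.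
Proof.
rewrite /triR /le0 /lt0 /= => -[Hs Ha Hb Hc] [Hs' Hx Hy Hz].
set s := orient a b c in Hs Ha Hb Hc *.
set s' := orient x y z in Hs' Hx Hy Hz *.
pose g := ((a.1 + b.1 + c.1) / 3, (a.2 + b.2 + c.2) / 3).
have n3 : (3 : R) != 0 by rewrite pnatr_eq0.
have Eab : orient a b g = s / 3 by rewrite /s /orient /g /=; field.
have Ebc : orient b c g = s / 3 by rewrite /s /orient /g /=; field.
have Eca : orient c a g = s / 3 by rewrite /s /orient /g /=; field.
case: (@small_t [:: (orient x y q * s', orient x y g * s' - orient x y q * s');
    (orient y z q * s', orient y z g * s' - orient y z q * s');
    (orient z x q * s', orient z x g * s' - orient z x q * s')]) => [|t [tp t1]];
  first by rewrite /= Hx Hy Hz.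
rewrite /= andbT => /and3P[H1 H2 H3].
have ss : 0 < s * s by rewrite -expr2 exprn_even_gt0.
have t1' : 0 <= 1 - t by rewrite subr_ge0.
have key : forall X, 0 <= X * s -> 0 < ((1 - t) * X + t * (s / 3)) * s.
  move=> X HX; rewrite mulrDl; apply: ltr_wpDl; first by rewrite -mulrA mulr_ge0.
  rewrite -mulrA mulr_gt0 // (_ : s / 3 * s = (s * s) / 3); last by rewrite mulrAC.
  by rewrite divr_gt0 // ltr0n.
exists (combo q g t); split; split => //; rewrite !orient_combo.
- by rewrite Eab key.
- by rewrite Ebc key.
- by rewrite Eca key.
- by rewrite (_ : ((1 - t) * orient x y q + t * orient x y g) * s' = orient x y q * s' + t * (orient x y g * s' - orient x y q * s')) //; ring.
- by rewrite (_ : ((1 - t) * orient y z q + t * orient y z g) * s' = orient y z q * s' + t * (orient y z g * s' - orient y z q * s')) //; ring.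
- by rewrite (_ : ((1 - t) * orient z x q + t * orient z x g) * s' = orient z x q * s' + t * (orient z x g * s' - orient z x q * s')) //; ring.
Qed.

Lemma same_side a b u v : 0 < orient a b u * orient a b v ->
  exists q, triR lt0 a b u q /\ triR lt0 a b v q.
Proof.
move=> H.
set su := orient a b u in H *; set sv := orient a b v in H *.
have su0 : su != 0 by apply/eqP => E; move: H; rewrite E mul0r ltxx.
have sv0 : sv != 0 by apply/eqP => E; move: H; rewrite E mulr0 ltxx.
have suu : 0 < su * su by rewrite -expr2 exprn_even_gt0.
have svv : 0 < sv * sv by rewrite -expr2 exprn_even_gt0.
have n2 : (2 : R) != 0 by rewrite pnatr_eq0.
pose qs (t : R) := ((1 - 2 * t) / 2 * (a.1 + b.1) + t * u.1 + t * v.1,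
                    (1 - 2 * t) / 2 * (a.2 + b.2) + t * u.2 + t * v.2).
have h2 : forall X : R, 0 < X -> 0 < X / 2 by move=> X HX; rewrite divr_gt0 // ltr0n.
case: (@small_t [:: (su * su / 2, orient b u v * su - su * su);
    (su * su / 2, orient u a v * su - su * su);
    (sv * sv / 2, orient b v u * sv - sv * sv);
    (sv * sv / 2, orient v a u * sv - sv * sv)]) => [|t [tp t1]];
  first by rewrite /= !h2.
rewrite /= andbT => /and4P[H1 H2 H3 H4].
exists (qs t); rewrite /triR /lt0 /=; split; split => //.
- rewrite (_ : orient a b (qs t) * su = t * (su * su + su * sv)); last first.
    by rewrite /su /sv /qs /orient /=; field.
  by rewrite mulr_gt0 // addr_gt0.
- by rewrite (_ : orient b u (qs t) * su = su * su / 2 + t * (orient b u v * su - su * su)) //;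
    rewrite /su /sv /qs /orient /=; field.
- by rewrite (_ : orient u a (qs t) * su = su * su / 2 + t * (orient u a v * su - su * su)) //;
    rewrite /su /sv /qs /orient /=; field.
- rewrite (_ : orient a b (qs t) * sv = t * (sv * sv + su * sv)); last first.
    by rewrite /su /sv /qs /orient /=; field.
  by rewrite mulr_gt0 // addr_gt0.
- by rewrite (_ : orient b v (qs t) * sv = sv * sv / 2 + t * (orient b v u * sv - sv * sv)) //;
    rewrite /su /sv /qs /orient /=; field.
- by rewrite (_ : orient v a (qs t) * sv = sv * sv / 2 + t * (orient v a u * sv - sv * sv)) //;
    rewrite /su /sv /qs /orient /=; field.
Qed.
End Raw2.

Section Quad.
Variable R : realFieldType.
Implicit Types (a b c d q : R * R).
Lemma triR_weak a b c q : triR lt0 a b c q -> triR le0 a b c q.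
Proof. by case=> H0 H1 H2 H3; split => //; apply: ltW. Qed.

Lemma QC1 a b c d q :
  orient a b c * orient a b d < 0 -> orient c d a * orient c d b < 0 ->
  triR le0 c d a q \/ triR le0 c d b q -> triR le0 a b c q \/ triR le0 a b d q.
Proof.
move=> H1 H2 [H|H]; first exact: quad_cover.
have H1' : orient b a c * orient b a d < 0 by rewrite !(orient_swap a b) mulrNN.
have H2' : orient c d b * orient c d a < 0 by rewrite mulrC.
by case: (quad_cover H1' H2' H) => /triR_swap; [left|right].
Qed.

Lemma QC2 a b c d q :
  orient a b c * orient a b d < 0 -> orient c d a * orient c d b < 0 ->
  triR le0 a b c q \/ triR le0 a b d q -> triR le0 c d a q \/ triR le0 c d b q.
Proof. by move=> H1 H2; apply: (QC1 H2 H1). Qed.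
End Quad.

Section Idx.
Variable R : realFieldType.
Variable n : nat.
Variable p : 'I_n -> R * R.
Implicit Types (a b c d x y z u v : 'I_n) (q : R * R) (t : {set 'I_n}).

Definition triP (r : R -> bool) a b c q := triR r (p a) (p b) (p c) q.

Lemma in3 x a b c : x \in [set a; b; c] -> [\/ x = a, x = b | x = c].
Proof. by rewrite !inE => /orP[/orP[]|] /eqP ->; [apply: Or31|apply: Or32|apply: Or33]. Qed.

Lemma in3T a b c : [/\ a \in [set a; b; c], b \in [set a; b; c] & c \in [set a; b; c]].
Proof. by rewrite !inE !eqxx !orbT. Qed.

Lemma triP_set r a b c a' b' c' q : [set a; b; c] = [set a'; b'; c'] ->
  triP r a' b' c' q -> triP r a b c q.
Proof.
move=> E H; have [D1 D2 D3] := triR_ne H.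
have [Ha Hb Hc] := in3T a' b' c'; rewrite -E in Ha Hb Hc.
move: H D1 D2 D3; rewrite /triP.
case: (in3 Ha) => ->; case: (in3 Hb) => ->; case: (in3 Hc) => ->;
  move=> H D1 D2 D3;
  first [ exact: H
        | by rewrite eqxx in D1 | by rewrite eqxx in D2 | by rewrite eqxx in D3
        | (case: (triR_all H) => H1 H2 H3 H4 H5; first [exact H1|exact H2|exact H3|exact H4|exact H5]) ].
Qed.

Lemma closed3 a b c q : in_tri_closed p [set a; b; c] q -> triP le0 a b c q.
Proof. by case=> a' [b' [c' [E H]]]; apply: triP_set E _. Qed.
Lemma closed3' a b c q : triP le0 a b c q -> in_tri_closed p [set a; b; c] q.
Proof. by move=> H; exists a, b, c. Qed.
Lemma open3 a b c q : in_tri_open p [set a; b; c] q -> triP lt0 a b c q.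
Proof. by case=> a' [b' [c' [E H]]]; apply: triP_set E _. Qed.
Lemma open3' a b c q : triP lt0 a b c q -> in_tri_open p [set a; b; c] q.
Proof. by move=> H; exists a, b, c. Qed.
Lemma nondeg3 a b c : nondeg p [set a; b; c] -> orient (p a) (p b) (p c) != 0.
Proof.
case=> a' [b' [c' [E H]]].
have : triP (fun _ => true) a b c (p a) by apply: triP_set E _; split.
by case.
Qed.

Lemma set3_neq a b u v : u != v -> u != a -> u != b -> [set a; b; u] != [set a; b; v].
Proof.
move=> H1 H2 H3; apply/eqP => E.
case: (in3T a b u) => _ _; by rewrite E !inE (negbTE H1) (negbTE H2) (negbTE H3).
Qed.

Lemma ss_contra T a b u v : triangulation p T -> [set a; b; u] \in T -> [set a; b; v] \in T ->
  u != v -> 0 < orient (p a) (p b) (p u) * orient (p a) (p b) (p v) -> False.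
Proof.
case=> _ Hdj _ _ Hu Hv uv H.
have [q [Qu Qv]] := same_side H.
have [_ ub ua] := triR_ne Qu.
have ua' : u != a by apply: contraNneq ua => ->.
have ub' : u != b by apply: contraNneq ub => ->.
by apply: (Hdj _ _ Hu Hv (set3_neq uv ua' ub') q); split; apply: open3'.
Qed.

Lemma two_max T a b x y z : triangulation p T -> [set a; b; x] \in T -> [set a; b; y] \in T ->
  [set a; b; z] \in T -> x != y -> y != z -> x != z -> False.
Proof.
move=> HT Hx Hy Hz xy yz xz.
have [Hnd _ _ _] := HT.
have sx := nondeg3 (Hnd _ Hx); have sy := nondeg3 (Hnd _ Hy); have sz := nondeg3 (Hnd _ Hz).
set X := orient (p a) (p b) (p x) in sx; set Y := orient (p a) (p b) (p y) in sy.
set Z := orient (p a) (p b) (p z) in sz.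
have [Hxy|Hxy] := ltP 0 (X * Y); first exact: (ss_contra HT Hx Hy xy).
have [Hyz|Hyz] := ltP 0 (Y * Z); first exact: (ss_contra HT Hy Hz yz).
apply: (ss_contra HT Hx Hz xz).
have : 0 <= (X * Z) * (Y * Y).
  by rewrite (_ : _ * _ = (X * Y) * (Y * Z)); [apply: mulr_le0 | ring].
move/(div_sq sy) => H; rewrite lt0r H andbT; exact: mulf_neq0.
Qed.

Lemma set2_cases a b a' b' : [set a; b] = [set a'; b'] -> a != b ->
  (a' = a /\ b' = b) \/ (a' = b /\ b' = a).
Proof.
move=> E ab.
have Ha' : a' \in [set a; b] by rewrite E !inE eqxx.
have Hb' : b' \in [set a; b] by rewrite E !inE eqxx orbT.
have Ha : a \in [set a'; b'] by rewrite -E !inE eqxx.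
have Hb : b \in [set a'; b'] by rewrite -E !inE eqxx orbT.
have [Ea'|Ea'] : a' = a \/ a' = b by move: Ha'; rewrite !inE => /orP[]/eqP; [left|right].
all: have [Eb'|Eb'] : b' = a \/ b' = b by move: Hb'; rewrite !inE => /orP[]/eqP; [left|right].
- by move: Hb; rewrite Ea' Eb' !inE orbb => /eqP E'; move: ab; rewrite E' eqxx.
- by left.
- by right.
- by move: Ha; rewrite Ea' Eb' !inE orbb => /eqP E'; move: ab; rewrite E' eqxx.
Qed.

Definition cq (a b c d : R * R) :=
  orient a b c * orient a b d < 0 /\ orient c d a * orient c d b < 0.
Lemma cq_swap1 (a b c d : R * R) : cq a b c d -> cq b a c d.
Proof. by case=> H1 H2; split; [rewrite !(orient_swap a b) mulrNN | rewrite mulrC]. Qed.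
Lemma cq_swap2 (a b c d : R * R) : cq a b c d -> cq a b d c.
Proof. by case=> H1 H2; split; [rewrite mulrC | rewrite !(orient_swap c d) mulrNN]. Qed.

Lemma adm_struct T f : admissible p T f -> exists a b c d,
  [/\ f = ([set a; b], [set c; d]), [/\ a != b, c != d, c \notin [set a; b] & d \notin [set a; b]],
      [set a; b; c] \in T /\ [set a; b; d] \in T,
      (forall t, t \in T -> a \in t -> b \in t -> t = [set a; b; c] \/ t = [set a; b; d]) &
      cq (p a) (p b) (p c) (p d)].
Proof.
case: f => e ph [[/andP[He _] HS] Hph Hdisj Hin Hcq] /=.
have /cards2P [a [b [ab Ee]]] := He.
have /cards2P [c [d [cd Eph]]] : #|ph| == 2 by rewrite Hph.
move: Ee Eph HS Hdisj Hin Hcq => /= Ee Eph; rewrite {}Ee {}Eph => HS Hdisj Hin Hcq; exists a, b, c, d.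
have Hc : c \notin [set a; b].
  apply/negP => Hc; move: Hdisj; rewrite disjoint_subset => /subsetP /(_ c Hc).
  by rewrite !inE eqxx.
have Hd : d \notin [set a; b].
  apply/negP => Hd; move: Hdisj; rewrite disjoint_subset => /subsetP /(_ d Hd).
  by rewrite !inE eqxx orbT.
have Tc : [set a; b; c] \in T by apply: Hin; rewrite !inE eqxx.
have Td : [set a; b; d] \in T by apply: Hin; rewrite !inE eqxx orbT.
split => //.
- move=> t tT Hat Hbt.
  have ne : [set a; b; c] != [set a; b; d].
    apply: set3_neq => //; apply: contraNneq Hc => ->; by rewrite !inE eqxx ?orbT.
  have : [set [set a; b; c]; [set a; b; d]] == [set t0 in T | [set a; b] \subset t0].
    rewrite eqEcard HS cards2 ne andbT; apply/subsetP => t0.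
    rewrite !inE subUset !sub1set => /orP[]/eqP->; rewrite ?Tc ?Td !inE !eqxx ?orbT //.
  move/eqP => E.
  have : t \in [set t0 in T | [set a; b] \subset t0] by rewrite inE tT subUset !sub1set Hat Hbt.
  by rewrite -E !inE => /orP[]/eqP->; [left|right].
- case: Hcq => a' [b' [c' [d' [E1 E2 H1 H2]]]].
  have H : cq (p a') (p b') (p c') (p d') by [].
  case: (set2_cases E1 ab) => -[? ?]; case: (set2_cases E2 cd) => -[? ?]; subst a' b' c' d'.
  + exact: H.
  + exact: cq_swap2.
  + exact: cq_swap1.
  + exact: cq_swap1 (cq_swap2 H).
Qed.

End Idx.

Section PT.
Variable R : realFieldType.
Variable n : nat.
Variable p : 'I_n -> R * R.
Implicit Types (a b c d x y z u v : 'I_n) (q : R * R) (t : {set 'I_n}) (T : {set {set 'I_n}}).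

Lemma perform_mem T a b c d t : t \in perform T ([set a; b], [set c; d]) =
  ((t \in T) && ~~ ((a \in t) && (b \in t))) || (t == [set c; d; a]) || (t == [set c; d; b]).
Proof.
rewrite /perform /= in_setU in_set subUset !sub1set imsetU !imset_set1 in_setU !in_set1.
by rewrite orbA.
Qed.

Lemma new_vs_old T a b c d x t q : triangulation p T ->
  cq (p a) (p b) (p c) (p d) -> [set a; b; c] \in T -> [set a; b; d] \in T ->
  x \in [set a; b] -> t \in T -> ~~ ((a \in t) && (b \in t)) ->
  in_tri_open p [set c; d; x] q -> in_tri_open p t q -> False.
Proof.
case=> _ Hdj _ _ [H1 H2] Tc Td Hx tT nab /open3 Ho1 Ho2.
have Hcl : triP p le0 a b c q \/ triP p le0 a b d q.
  apply: QC1 => //; move: Hx; rewrite !inE => /orP[]/eqP Ex; subst x;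
    move/triR_weak: Ho1 => Ho1; [by left|by right].
case: Ho2 => a2 [b2 [c2 [Et Hr]]].
have Hr' : triR lt0 (p a2) (p b2) (p c2) q by [].
have Hne : forall t0, a \in t0 -> b \in t0 -> t0 != t.
  by move=> t0 Ha Hb; apply: contraNneq nab => <-; rewrite Ha Hb.
case: Hcl => H; have [q' [Q1 Q2]] := perturb H Hr'.
- have [Ha Hb _] := in3T a b c.
  apply: (Hdj _ _ Tc tT (Hne _ Ha Hb) q'); split; first exact: open3'.
  by exists a2, b2, c2.
- have [Ha Hb _] := in3T a b d.
  apply: (Hdj _ _ Td tT (Hne _ Ha Hb) q'); split; first exact: open3'.
  by exists a2, b2, c2.
Qed.

Lemma PT T f : triangulation p T -> admissible p T f -> triangulation p (perform T f).
Proof.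
move=> HT Hadm.
have [a [b [c [d [-> [ab cd cab dab] [Tc Td] Huniq Hcq]]]]] := adm_struct Hadm.
have [H1 H2] := Hcq.
case: (HT) => Hnd Hdj Hcov Hvert.
have Rc : orient (p c) (p d) (p a) != 0 by apply/eqP => E; move: H2; rewrite E mul0r ltxx.
have Rd : orient (p c) (p d) (p b) != 0 by apply/eqP => E; move: H2; rewrite E mulr0 ltxx.
have ina : a \in [set a; b] by rewrite !inE eqxx.
have inb : b \in [set a; b] by rewrite !inE eqxx orbT.
split.
- move=> t; rewrite perform_mem => /orP[/orP[/andP[tT _]|/eqP->]|/eqP->].
  + exact: Hnd.
  + by exists c, d, a.
  + by exists c, d, b.
- have nn : forall q, in_tri_open p [set c; d; a] q -> in_tri_open p [set c; d; b] q -> False.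
    move=> q /open3 [_ Ha _ _] /open3 [_ Hb _ _]; rewrite /lt0 in Ha Hb.
    have : 0 < (orient (p c) (p d) q * orient (p c) (p d) (p a)) *
               (orient (p c) (p d) q * orient (p c) (p d) (p b)) by rewrite mulr_gt0.
    rewrite (_ : _ * _ = (orient (p c) (p d) q * orient (p c) (p d) q) *
        (orient (p c) (p d) (p a) * orient (p c) (p d) (p b))); last by ring.
    rewrite ltNge => /negP; apply; apply: mulr_ge0_le0; first by rewrite -expr2 sqr_ge0.
    exact: ltW.
  move=> t1 t2; rewrite !perform_mem => Ht1 Ht2 t12 q [Ho1 Ho2].
  case/orP: Ht1 => [/orP[/andP[t1T n1]|/eqP E1]|/eqP E1];
  case/orP: Ht2 => [/orP[/andP[t2T n2]|/eqP E2]|/eqP E2].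
  + exact: (Hdj _ _ t1T t2T t12 q).
  + by subst t2; apply: (new_vs_old HT Hcq Tc Td ina t1T n1 Ho2 Ho1).
  + by subst t2; apply: (new_vs_old HT Hcq Tc Td inb t1T n1 Ho2 Ho1).
  + by subst t1; apply: (new_vs_old HT Hcq Tc Td ina t2T n2 Ho1 Ho2).
  + by subst t1 t2; rewrite eqxx in t12.
  + by subst t1 t2; apply: (nn q).
  + by subst t1; apply: (new_vs_old HT Hcq Tc Td inb t2T n2 Ho1 Ho2).
  + by subst t1 t2; apply: (nn q).
  + by subst t1 t2; rewrite eqxx in t12.
- move=> q; split.
  + move/Hcov => [t tT Hc].
    case: (boolP ((a \in t) && (b \in t))) => [/andP[Ha Hb]|nab].
    * have Hcl : triP p le0 a b c q \/ triP p le0 a b d q.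
        by case: (Huniq t tT Ha Hb) => E; subst t; move/closed3: Hc => Hc; [left|right].
      case: (QC2 H1 H2 Hcl) => Hn.
      -- by exists [set c; d; a]; [rewrite perform_mem eqxx orbT | exact: closed3'].
      -- by exists [set c; d; b]; [rewrite perform_mem eqxx !orbT | exact: closed3'].
    * by exists t => //; rewrite perform_mem tT nab.
  + case=> t; rewrite perform_mem => /orP[/orP[/andP[tT _]|/eqP->]|/eqP->] Hc.
    * by apply/Hcov; exists t.
    * have : triP p le0 a b c q \/ triP p le0 a b d q by apply: QC1 => //; left; exact: closed3.
      by case=> H; apply/Hcov; [exists [set a; b; c] | exists [set a; b; d]] => //; exact: closed3'.
    * have : triP p le0 a b c q \/ triP p le0 a b d q by apply: QC1 => //; right; exact: closed3.
      by case=> H; apply/Hcov; [exists [set a; b; c] | exists [set a; b; d]] => //; exact: closed3'.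
- move=> t i; rewrite perform_mem => /orP[/orP[/andP[tT _]|/eqP->]|/eqP->] Hc.
  + exact: Hvert Hc.
  + have Hc' := closed3 Hc.
    have : i \in [set a; b; c] \/ i \in [set a; b; d].
      have : triP p le0 a b c (p i) \/ triP p le0 a b d (p i) by apply: QC1 => //; left.
      by case=> H; [left; apply: (Hvert _ _ Tc) | right; apply: (Hvert _ _ Td)]; exact: closed3'.
    have Hib : i != b.
      by apply/eqP => E; subst i; case: Hc' => _ + _ _; rewrite /le0 mulrC leNgt H2.
    by case=> /in3 [->|E|->]; rewrite !inE ?eqxx ?orbT //; move: Hib; rewrite E eqxx.
  + have Hc' := closed3 Hc.
    have : i \in [set a; b; c] \/ i \in [set a; b; d].
      have : triP p le0 a b c (p i) \/ triP p le0 a b d (p i) by apply: QC1 => //; right.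
      by case=> H; [left; apply: (Hvert _ _ Tc) | right; apply: (Hvert _ _ Td)]; exact: closed3'.
    have Hia : i != a.
      by apply/eqP => E; subst i; case: Hc' => _ + _ _; rewrite /le0 leNgt H2.
    by case=> /in3 [E|->|->]; rewrite !inE ?eqxx ?orbT //; move: Hia; rewrite E eqxx.
Qed.
End PT.

Ltac simp_neq := repeat match goal with
 | H : is_true (?x != ?y) |- context [?x == ?y] => rewrite (negbTE H)
 | H : is_true (?x != ?y) |- context [?y == ?x] => rewrite [y == x]eq_sym (negbTE H)
 end.
Ltac perm3 := let z := fresh "z" in apply/setP; intro z; rewrite !inE;
  repeat match goal with |- context [z == ?y] => case: (z == y) end.
Ltac fin := rewrite ?inE; simp_neq; rewrite ?eqxx /= ?orbT ?orbF ?andbT ?andbF //.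

Section Comm.
Variable R : realFieldType.
Variable n : nat.
Variable p : 'I_n -> R * R.
Implicit Types (a b c d u v w x y z : 'I_n) (t : {set 'I_n}) (T : {set {set 'I_n}}).

Lemma set3C1 a b c : [set a; b; c] = [set b; a; c].
Proof. by apply/setP => z; rewrite !inE; case: (z == a); case: (z == b); case: (z == c). Qed.
Lemma set3C2 a b c : [set a; b; c] = [set a; c; b].
Proof. by apply/setP => z; rewrite !inE; case: (z == a); case: (z == b); case: (z == c). Qed.
Lemma set2C a b : [set a; b] = [set b; a].
Proof. by apply/setP => z; rewrite !inE orbC. Qed.
Lemma sub2 a b t : ([set a; b] \subset t) = (a \in t) && (b \in t).
Proof. by rewrite subUset !sub1set. Qed.

Lemma set2_eq a b c d : c != d -> a \in [set c; d] -> b \in [set c; d] -> a != b -> [set a; b] = [set c; d].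
Proof.
move=> cd ha hb ab; apply/eqP; rewrite eqEcard !cards2 ab cd andbT.
by rewrite subUset !sub1set ha hb.
Qed.

Lemma adm_eq T T' (g : flip n) : (forall t, g.1 \subset t -> (t \in T) = (t \in T')) ->
  admissible p T g -> admissible p T' g.
Proof.
move=> H [[/andP[He /existsP[t /andP[tT gt]]] HS] Hph Hd Hin Hcq]; split => //.
- split; first by apply/andP; split => //; apply/existsP; exists t; rewrite -H // tT.
  rewrite -HS; apply: eq_card => t0; rewrite !inE.
  by case: (boolP (g.1 \subset t0)) => h; [rewrite (H _ h) | rewrite !andbF].
- by move=> y hy; rewrite -H; [exact: Hin | exact: subsetUl].
Qed.

Lemma in3a a b c : a \in [set a; b; c]. Proof. by rewrite !inE eqxx. Qed.
Lemma in3b a b c : b \in [set a; b; c]. Proof. by rewrite !inE eqxx orbT. Qed.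
Lemma in3c a b c : c \in [set a; b; c]. Proof. by rewrite !inE eqxx orbT. Qed.
Lemma bool7 (bT ab uv n1 n2 m1 m2 : bool) : ~~ (n1 && uv) -> ~~ (n2 && uv) ->
  ~~ (m1 && ab) -> ~~ (m2 && ab) ->
  (((bT && ~~ uv) || m1 || m2) && ~~ ab) || n1 || n2 =
  (((bT && ~~ ab) || n1 || n2) && ~~ uv) || m1 || m2.
Proof. by case: bT; case: ab; case: uv; case: n1; case: n2; case: m1; case: m2. Qed.

Lemma mem_perm T t t' : t \in T -> t = t' -> t' \in T.
Proof. by move=> h <-. Qed.

Lemma E_core T1 T2 c0 d0 a' b0 u v : triangulation p T1 -> triangulation p T2 ->
  [set c0; d0; a'] \in T1 -> [set c0; d0; b0] \in T1 ->
  (forall t, t \in T1 -> ~~ ((a' \in t) && (b0 \in t))) ->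
  a' != b0 -> c0 != d0 ->
  [set u; v; c0] \in T1 -> [set u; v; a'] \in T1 -> u != v -> u != c0 -> u != a' -> v != c0 -> v != a' ->
  [set c0; a'; u] \in T2 -> [set c0; a'; v] \in T2 -> [set c0; d0; a'] \in T2 -> False.
Proof.
move=> HT1 HT2 h1 h2 NF ab cd huc hua uv uc ua vc va g1 g2 g3.
case: (eqVneq d0 u) => [E|du].
  subst u; case: (eqVneq v b0) => [E|vb].
    by subst v; move: (NF _ hua); fin.
  have h3 : [set c0; d0; v] \in T1 by apply: (mem_perm huc); perm3.
  by apply: (two_max HT1 h1 h2 h3 ab); rewrite eq_sym.
case: (eqVneq d0 v) => [E|dv].
  subst v; case: (eqVneq u b0) => [E|ub].
    by subst u; move: (NF _ hua); fin.
  have h3 : [set c0; d0; u] \in T1 by apply: (mem_perm huc); perm3.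
  by apply: (two_max HT1 h1 h2 h3 ab); rewrite eq_sym.
have h3 : [set c0; a'; d0] \in T2 by apply: (mem_perm g3); perm3.
exact: (two_max HT2 h3 g1 g2 du uv dv).
Qed.

Lemma commute T f g :
  triangulation p T -> admissible p T f ->
  triangulation p (perform T f) -> admissible p (perform T f) g ->
  triangulation p (perform (perform T f) g) ->
  f.2 != g.1 -> ~~ share_tri (perform T f) f.2 g.1 ->
  [/\ admissible p T g, admissible p (perform T g) f,
      perform (perform T g) f = perform (perform T f) g,
      triangulation p (perform T g) &
      [/\ forall t, t \in T -> f.1 \subset t -> ~~ (g.1 \subset t),
          forall t, t \in perform T g -> f.1 \subset t -> t \in T,
          f.1 != g.1 &
          g.2 != f.1 /\ ~~ share_tri (perform T g) g.2 f.1]].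
Proof.
move=> HT Hf HT1 Hg HT2 ne12 nsh.
have [a [b [c [d [Ef [ab cd cab dab] [Tc Td] Uf Hcqf]]]]] := adm_struct Hf.
subst f; rewrite /= in ne12 nsh *.
set T1 := perform T _ in HT1 Hg HT2 nsh *.
have [u [v [w [x [Eg [uv wx wuv xuv] [T1w T1x] Ug Hcqg]]]]] := adm_struct Hg.
subst g; rewrite /= in ne12 nsh *.
have memT1 : forall t, (t \in T1) = ((t \in T) && ~~ ((a \in t) && (b \in t))) ||
   (t == [set c; d; a]) || (t == [set c; d; b]) by move=> t; rewrite perform_mem.
move: cab dab wuv xuv; rewrite !inE !negb_or => /andP[ca cb] /andP[da db] /andP[wu wv] /andP[xu xv].
have NF : forall t, t \in T1 -> ~~ ((a \in t) && (b \in t)).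
  move=> t; rewrite memT1 => /orP[/orP[/andP[_ h]|/eqP->]|/eqP->] //; fin.
have A : forall y, y \in [set a; b] -> ~~ ((u \in [set c; d; y]) && (v \in [set c; d; y])).
  move=> y hy; apply/negP => /andP[hu hv]; move/negP: nsh; apply.
  have hT : [set c; d; y] \in T1 by rewrite memT1; move: hy; rewrite !inE => /orP[]/eqP->; rewrite !eqxx ?orbT.
  rewrite /share_tri; apply/and4P; split => //.
  - by rewrite /is_edge cards2 cd; apply/existsP; exists [set c; d; y]; rewrite hT subsetUl.
  - by rewrite /is_edge cards2 uv; apply/existsP; exists [set u; v; w]; rewrite T1w subsetUl.
  - by apply/existsP; exists [set c; d; y]; rewrite hT subsetUl sub2 hu hv.
have nUV : forall t, t \in T1 -> (u \in t) && (v \in t) -> t \in T.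
  move=> t; rewrite memT1 => /orP[/orP[/andP[h _]|/eqP->]|/eqP->] // huv.
  - by have := A a; rewrite huv !inE eqxx => /(_ isT).
  - by have := A b; rewrite huv !inE eqxx orbT => /(_ isT).
have B : forall t, t \in T -> a \in t -> b \in t -> ~~ ((u \in t) && (v \in t)).
  move=> t tT ha hb; apply/negP => /andP[hu hv].
  have Hw : [set u; v; w] \in T1 := T1w.
  have key : forall y, (y == c) || (y == d) -> t = [set a; b; y] -> False.
    move=> y hy Et; subst t.
    have hN := NF _ Hw.
    have ha2 : a \in [set a; b] by rewrite !inE eqxx.
    have hb2 : b \in [set a; b] by rewrite !inE eqxx orbT.
    have hAa := A a ha2; have hAb := A b hb2.
    case/orP: hy => /eqP Ey; subst y;
    case: (in3 hu) => Eu; case: (in3 hv) => Ev; subst u v;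
      first [ by rewrite eqxx in uv
            | by move: hN; fin
            | by move: hAa; fin
            | by move: hAb; fin
            | idtac ].
  by case: (Uf t tT ha hb) => Et; [apply: (key c) | apply: (key d)]; rewrite ?eqxx ?orbT.
have ha2 : a \in [set a; b] by rewrite !inE eqxx.
have hb2 : b \in [set a; b] by rewrite !inE eqxx orbT.
have hu2 : u \in [set u; v] by rewrite !inE eqxx.
have hv2 : v \in [set u; v] by rewrite !inE eqxx orbT.
have eqT1T : forall t, [set u; v] \subset t -> (t \in T1) = (t \in T).
  move=> t; rewrite sub2 => huv; apply/idP/idP => [h|tT]; first exact: nUV.
  rewrite memT1 tT /=; case: (boolP ((a \in t) && (b \in t))) => [/andP[ha hb]|h] //.
  by move: (B t tT ha hb); rewrite huv.
have HgT : admissible p T ([set u; v], [set w; x]) := adm_eq (T:=T1) (T':=T) (g:=([set u; v], [set w; x])) eqT1T Hg.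
have HTg := PT HT HgT.
set Tg := perform T ([set u; v], [set w; x]) in HTg *.
have memTg : forall t, (t \in Tg) = ((t \in T) && ~~ ((u \in t) && (v \in t))) ||
   (t == [set w; x; u]) || (t == [set w; x; v]) by move=> t; rewrite perform_mem.
have abT : forall t, t \in T -> a \in t -> b \in t -> t \in Tg.
  by move=> t tT ha hb; rewrite memTg tT (B t tT ha hb).
have NE : [set w; x] != [set a; b].
  apply/eqP => E.
  have Tcg := abT _ Tc (in3a a b c) (in3b a b c).
  have Tdg := abT _ Td (in3a a b d) (in3b a b d).
  have [y [hy yc yd]] : exists y, [/\ y \in [set u; v], y != c & y != d].
    case: (boolP (u \in [set c; d])) => hu.
      case: (boolP (v \in [set c; d])) => hv.
        by move: ne12; rewrite (set2_eq cd hu hv uv) eqxx.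
      by exists v; move: hv; rewrite !inE negb_or => /andP[? ?]; split => //; rewrite eqxx orbT.
    by exists u; move: hu; rewrite !inE negb_or => /andP[? ?]; split => //; rewrite eqxx.
  have Tyg : [set a; b; y] \in Tg.
    by rewrite -E memTg; move: hy; rewrite !inE => /orP[]/eqP->; rewrite !eqxx ?orbT.
  by apply: (two_max HTg Tcg Tdg Tyg cd); rewrite eq_sym.
have C : forall y, y \in [set u; v] -> ~~ ((a \in [set w; x; y]) && (b \in [set w; x; y])).
  move=> y hy; apply/negP => /andP[ha hb]; move: hy; rewrite !inE => /orP[]/eqP Ey; subst y;
  case: (in3 ha) => Ea; case: (in3 hb) => Eb; subst a b;
    first [ by rewrite eqxx in ab
          | by rewrite eqxx in NE
          | by rewrite set2C eqxx in NE
          | by move: (NF _ T1w); fin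
          | by move: (NF _ T1x); fin ].
have nTg : forall t, t \in Tg -> a \in t -> b \in t -> t \in T.
  move=> t; rewrite memTg => /orP[/orP[/andP[h _]|/eqP->]|/eqP->] // ha hb.
  - by move: (C u hu2); rewrite ha hb.
  - by move: (C v hv2); rewrite ha hb.
have eqTTg : forall t, [set a; b] \subset t -> (t \in T) = (t \in Tg).
  move=> t; rewrite sub2 => /andP[ha hb]; apply/idP/idP => h; [exact: abT | exact: nTg].
have HfTg : admissible p Tg ([set a; b], [set c; d]) := adm_eq (T:=T) (T':=Tg) (g:=([set a; b], [set c; d])) eqTTg Hf.
have Eq : perform Tg ([set a; b], [set c; d]) = perform T1 ([set u; v], [set w; x]).
  apply/setP => t; rewrite !perform_mem ?memTg ?memT1.
  apply: bool7.
  - by apply/negP => /andP[/eqP-> h]; move: (A a ha2); rewrite h.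
  - by apply/negP => /andP[/eqP-> h]; move: (A b hb2); rewrite h.
  - by apply/negP => /andP[/eqP-> h]; move: (C u hu2); rewrite h.
  - by apply/negP => /andP[/eqP-> h]; move: (C v hv2); rewrite h.
have Eshare : ~~ share_tri Tg [set w; x] [set a; b].
  apply/negP; rewrite /share_tri => /and4P[_ _ _ /existsP[t /andP[tTg /andP[Hwx Hab]]]].
  move: Hwx Hab; rewrite !sub2 => /andP[hw hx] /andP[ha hb].
  have tT := nTg t tTg ha hb.
  have hca : [set c; d; a] \in T1 by rewrite memT1 eqxx /= ?orbT.
  have hcb : [set c; d; b] \in T1 by rewrite memT1 eqxx /= ?orbT.
  set T2 := perform T1 _ in HT2.
  have hN2u : [set w; x; u] \in T2 by rewrite perform_mem eqxx /= ?orbT.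
  have hN2v : [set w; x; v] \in T2 by rewrite perform_mem eqxx /= ?orbT.
  have hca2 : [set c; d; a] \in T2 by rewrite perform_mem hca (A a ha2).
  have hcb2 : [set c; d; b] \in T2 by rewrite perform_mem hcb (A b hb2).
  have NF' : forall t, t \in T1 -> ~~ ((b \in t) && (a \in t)) by move=> t' /NF; rewrite andbC.
  case: (Uf t tT ha hb) => Et; subst t; case: (in3 hw) => Ew; case: (in3 hx) => Ex; subst w x;
  first [ by rewrite eqxx in wx | by rewrite eqxx in NE | by rewrite set2C eqxx in NE
        | by apply: (E_core (c0:=c) (d0:=d) (a':=a) (b0:=b) (u:=u) (v:=v) HT1 HT2);
            first [ assumption | by rewrite eq_sym | exact: NF | exact: NF'
                  | match goal with H : is_true (_ \in ?T) |- is_true (_ \in ?T) =>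
                      by apply: (mem_perm H); perm3 end ]
        | by apply: (E_core (c0:=c) (d0:=d) (a':=b) (b0:=a) (u:=u) (v:=v) HT1 HT2);
            first [ assumption | by rewrite eq_sym | exact: NF | exact: NF'
                  | match goal with H : is_true (_ \in ?T) |- is_true (_ \in ?T) =>
                      by apply: (mem_perm H); perm3 end ]
        | by apply: (E_core (c0:=d) (d0:=c) (a':=a) (b0:=b) (u:=u) (v:=v) HT1 HT2);
            first [ assumption | by rewrite eq_sym | exact: NF | exact: NF'
                  | match goal with H : is_true (_ \in ?T) |- is_true (_ \in ?T) =>
                      by apply: (mem_perm H); perm3 end ]
        | by apply: (E_core (c0:=d) (d0:=c) (a':=b) (b0:=a) (u:=u) (v:=v) HT1 HT2);
            first [ assumption | by rewrite eq_sym | exact: NF | exact: NF'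
                  | match goal with H : is_true (_ \in ?T) |- is_true (_ \in ?T) =>
                      by apply: (mem_perm H); perm3 end ] ].
split => //.
split => //.
- by move=> t tT; rewrite !sub2 => /andP[ha hb]; exact: B.
- by move=> t h; rewrite sub2 => /andP[ha hb]; exact: nTg.
- by apply/eqP => E; move: (NF _ T1w); rewrite -E; fin.
Qed.


End Comm.

Local Close Scope ring_scope.

Section Seq.
Variable R : realFieldType.
Variable n : nat.
Variable p : 'I_n -> R * R.
Implicit Types (T : {set {set 'I_n}}) (G A B : seq (flip n)) (f g : flip n).

Definition eps G k := (nth (flip0 n) G k).1.
Definition phi G k := (nth (flip0 n) G k).2.

Definition adjP (T0 : {set {set 'I_n}}) G (x y : nat) : Prop :=
  [/\ x < y, y < size G,
      phi G x = eps G y \/ share_tri (trs T0 G y) (phi G x) (eps G y)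
    & forall z, x < z -> z < y -> eps G z != phi G x].

Definition sw (k z : nat) := if z == k then k.+1 else if z == k.+1 then k else z.

Lemma trsS (T0 : {set {set 'I_n}}) G k : k < size G -> trs T0 G k.+1 = perform (trs T0 G k) (nth (flip0 n) G k).
Proof. by move=> h; rewrite /trs (take_nth (flip0 n) h) -cats1 foldl_cat. Qed.

Lemma nth_sw A B f g z :
  nth (flip0 n) (A ++ g :: f :: B) z = nth (flip0 n) (A ++ f :: g :: B) (sw (size A) z).
Proof.
rewrite /sw; case: (ltngtP z (size A)) => h.
- by rewrite (ltn_eqF (ltnW h : z < (size A).+1)) !nth_cat h.
- case: eqP => [->|h2].
  + by rewrite !nth_cat ltnn ltnNge leqnSn /= subnn subSnn.
  + rewrite !nth_cat ltnNge (ltnW h) /=.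
    have -> : z - size A = (z - (size A).+2).+2 by move/eqP: h2; lia.
    by [].
- have -> : z = size A by lia.
  rewrite !nth_cat ltnn ltnNge leqnSn /= subnn subSnn.
  by [].
Qed.

Lemma trs_pre (T0 : {set {set 'I_n}}) A B f g y : y <= size A ->
  trs T0 (A ++ g :: f :: B) y = trs T0 (A ++ f :: g :: B) y.
Proof. by move=> h; rewrite /trs !takel_cat. Qed.

Lemma trs_pre' (T0 : {set {set 'I_n}}) A B : trs T0 (A ++ B) (size A) = foldl (@perform n) T0 A.
Proof. by rewrite /trs take_size_cat. Qed.

Lemma trs_post (T0 : {set {set 'I_n}}) A B f g y :
  perform (perform (foldl (@perform n) T0 A) g) f = perform (perform (foldl (@perform n) T0 A) f) g ->
  (size A).+2 <= y ->
  trs T0 (A ++ g :: f :: B) y = trs T0 (A ++ f :: g :: B) y.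
Proof.
move=> E h; rewrite /trs !take_cat ltnNge (leq_trans (leqnSn _) (leq_trans (leqnSn _) h)) /=.
have -> : y - size A = (y - (size A).+2).+2 by lia.
by rewrite /= !foldl_cat /= E.
Qed.

Lemma share_transfer T T' (e1 e2 : {set 'I_n}) : (forall t, t \in T -> e1 \subset t -> e2 \subset t -> t \in T') ->
  share_tri T e1 e2 -> share_tri T' e1 e2.
Proof.
rewrite /share_tri /is_edge => H /and4P[ne /andP[d1 _] /andP[d2 _] /existsP[t /andP[tT /andP[h1 h2]]]].
have tT' := H t tT h1 h2.
apply/and4P; split => //.
- by rewrite d1 /=; apply/existsP; exists t; rewrite tT' h1.
- by rewrite d2 /=; apply/existsP; exists t; rewrite tT' h2.
- by apply/existsP; exists t; rewrite tT' h1 h2.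
Qed.

Lemma perform_old T f t : t \in T -> ~~ (f.1 \subset t) -> t \in perform T f.
Proof. by rewrite /perform in_setU in_set => -> ->. Qed.

Lemma sw_cases k z : (z = k /\ sw k z = k.+1) \/ (z = k.+1 /\ sw k z = k) \/
  (z != k /\ z != k.+1 /\ sw k z = z).
Proof.
rewrite /sw; case: eqP => [->|h1]; first by left.
case: eqP => [->|h2]; first by right; left.
by right; right; split; [apply/eqP|split; [apply/eqP|]].
Qed.

Lemma sw_inv k z : sw k (sw k z) = z.
Proof.
case: (sw_cases k z) => [[-> ->]|[[-> ->]|[h1 [h2 ->]]]].
- by rewrite /sw (gtn_eqF (ltnSn k)) eqxx.
- by rewrite /sw eqxx.
- by rewrite /sw (negbTE h1) (negbTE h2).
Qed.

Lemma swap_ok (T0 : {set {set 'I_n}}) A B f g :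
  valid p T0 (A ++ f :: g :: B) ->
  ~ adjP T0 (A ++ f :: g :: B) (size A) (size A).+1 ->
  [/\ valid p T0 (A ++ g :: f :: B),
      trs T0 (A ++ g :: f :: B) (size (A ++ f :: g :: B)) =
        trs T0 (A ++ f :: g :: B) (size (A ++ f :: g :: B))
    & forall x y, adjP T0 (A ++ g :: f :: B) x y ->
        adjP T0 (A ++ f :: g :: B) (sw (size A) x) (sw (size A) y)].
Proof.
set G := A ++ f :: g :: B; set G' := A ++ g :: f :: B.
move=> [Hv Hfin] nadj.
set k := size A.
have sG : size G = k + (size B).+2 by rewrite size_cat.
have sG' : size G' = size G by rewrite !size_cat.
have nk : nth (flip0 n) G k = f by rewrite nth_cat ltnn subnn.
have nk1 : nth (flip0 n) G k.+1 = g by rewrite nth_cat ltnNge leqnSn /= subSnn.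
have kG : k < size G by rewrite sG; lia.
have k1G : k.+1 < size G by rewrite sG; lia.
set T := trs T0 G k.
have TE : T = foldl (@perform n) T0 A by rewrite /T trs_pre'.
have [HT Hf] := Hv k kG; rewrite nk in Hf.
have [HT1 Hg] := Hv k.+1 k1G; rewrite nk1 trsS // nk -/T in HT1 Hg.
have HT2 : triangulation p (perform (perform T f) g).
  have E2 : trs T0 G k.+2 = perform (perform T f) g by rewrite trsS // trsS // nk nk1.
  case: (ltngtP k.+2 (size G)) => h.
  - by rewrite -E2; case: (Hv _ h).
  - by move: h; rewrite sG; lia.
  - by rewrite -E2 h.
have nonadj : f.2 != g.1 /\ ~~ share_tri (perform T f) f.2 g.1.
  case: (eqVneq f.2 g.1) => [E|ne].
    by exfalso; apply: nadj; split => //; [left; rewrite /phi /eps nk nk1 | move=> z h1 h2; lia].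
  split => //; apply/negP => sh; apply: nadj; split => //.
    by right; rewrite /phi /eps nk nk1 trsS // nk.
  by move=> z h1 h2; lia.
case: nonadj => ne nsh.
have [HgT HfTg Eq HTg [B' C' ne12 [ne21 nsh21]]] := commute HT Hf HT1 Hg HT2 ne nsh.
have trsE : forall y, y != k.+1 -> trs T0 G' y = trs T0 G y.
  move=> y hy; case: (leqP y k) => h; first exact: trs_pre.
  apply: trs_post; first by rewrite -TE.
  by move: hy h; rewrite /k; lia.
have trsk1 : trs T0 G' k.+1 = perform T g.
  by rewrite trsS ?sG' // trs_pre // nth_sw /sw eqxx nk1.
have nthE : forall z, nth (flip0 n) G' z = nth (flip0 n) G (sw k z) by move=> z; apply: nth_sw.
have fin : trs T0 G' (size G) = trs T0 G (size G) by apply: trsE; rewrite sG; lia.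
split => //.
- split; last by rewrite sG' fin.
  move=> y; rewrite sG' => hy; rewrite nthE.
  case: (eqVneq y k.+1) => [->|hy1].
    by rewrite trsk1 /sw (gtn_eqF (ltnSn k)) eqxx nk.
  rewrite trsE //; case: (eqVneq y k) => [->|hy0].
    by rewrite /sw eqxx nk1 /T.
  rewrite /sw (negbTE hy0) (negbTE hy1); exact: Hv.
move=> x y [xy yG c1 c2]; rewrite sG' in yG.
have epsE : forall z, eps G' z = eps G (sw k z) by move=> z; rewrite /eps nthE.
have phiE : forall z, phi G' z = phi G (sw k z) by move=> z; rewrite /phi nthE.
have epsk : eps G k = f.1 by rewrite /eps nk.
have epsk1 : eps G k.+1 = g.1 by rewrite /eps nk1.
have phik : phi G k = f.2 by rewrite /phi nk.
have phik1 : phi G k.+1 = g.2 by rewrite /phi nk1.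
have swk : sw k k = k.+1 by rewrite /sw eqxx.
have swk1 : sw k k.+1 = k by rewrite /sw (gtn_eqF (ltnSn k)) eqxx.
have swo : forall z, z != k -> z != k.+1 -> sw k z = z.
  by move=> z h1 h2; rewrite /sw (negbTE h1) (negbTE h2).
have trsG1 : trs T0 G k.+1 = perform T f by rewrite trsS // nk.
case: (eqVneq y k.+1) => [Ey|ny1].
- subst y; rewrite swk1; case: (eqVneq x k) => [Ex|nx].
  + subst x; exfalso; move: c1; rewrite phiE epsE swk swk1 phik1 epsk trsk1.
    case=> [E|sh]; first by move/eqP: ne21.
    by move: nsh21; rewrite sh.
  + have xk : x < k by move: xy nx; lia.
    rewrite swo //; last by move: xk; lia.
    split => //.
    * move: c1; rewrite phiE epsE swk1 (swo x nx) ?epsk ?trsk1; last by move: xk; lia.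
      case=> [E|sh]; [by left | right].
      apply: (share_transfer _ sh) => t tTg _ h; exact: C'.
    * move=> z h1 h2; have := c2 z h1 (ltnW h2 : z < k.+1).
      by rewrite epsE phiE !swo //; move: h1 h2 xk; lia.
- rewrite (trsE _ ny1) in c1.
  case: (eqVneq y k) => [Ey|ny0].
  + subst y; rewrite swk.
    have xk : x < k by [].
    have nx : x != k by move: xk; lia.
    have nx1 : x != k.+1 by move: xk; lia.
    rewrite (swo x nx nx1); move: c1; rewrite phiE epsE swk (swo x nx nx1) epsk1 -/T => c1.
    split => //.
    * by rewrite ltnW.
    * case: c1 => [E|sh]; [by left; rewrite epsk1 | right]; rewrite trsG1 epsk1.
      apply: (share_transfer _ sh) => t tT _ h; apply: perform_old => //.
      by apply/negP => hf; move: (B' t tT hf); rewrite h.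
    * move=> z h1 h2; case: (eqVneq z k) => [Ez|nz].
      - subst z; rewrite epsk; case: c1 => [->|sh]; first by [].
        apply/eqP => E; move: sh; rewrite /share_tri -E => /and4P[_ _ _ /existsP[t /andP[tT /andP[h3 h4]]]].
        by move: (B' t tT h3); rewrite h4.
      - have zk : z < k by move: h2 nz; lia.
        have nz1 : z != k.+1 by move: zk; lia.
        by have := c2 z h1 zk; rewrite epsE phiE (swo z nz nz1) (swo x nx nx1).
  + rewrite (swo y ny0 ny1); split.
    * case: (sw_cases k x) => [[Ex ->]|[[Ex ->]|[nx0 [nx1 ->]]]]; by move: xy ny0 ny1; lia.
    * by [].
    * by move: c1; rewrite phiE epsE (swo y ny0 ny1).
    * move=> z h1 h2.
      case: (sw_cases k x) => [[Ex Ex']|[[Ex Ex']|[nx0 [nx1 Ex']]]]; rewrite Ex' in h1 *.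
      - have nz0 : z != k by move: h1; lia.
        have nz1 : z != k.+1 by move: h1; lia.
        have := c2 z; rewrite epsE phiE Ex' (swo z nz0 nz1); apply; move: h1 h2 Ex; lia.
      - case: (eqVneq z k.+1) => [Ez|nz1].
          by subst z; rewrite epsk1 phik eq_sym.
        have nz0 : z != k by move: h1; lia.
        have := c2 z; rewrite epsE phiE Ex' (swo z nz0 nz1); apply; move: h1 h2 Ex nz1; lia.
      - have := c2 (sw k z); rewrite epsE phiE sw_inv Ex'; apply.
        + case: (sw_cases k z) => [[Ez ->]|[[Ez ->]|[nz0 [nz1 ->]]]]; move: h1 h2 ny0 ny1 nx0 nx1; lia.
        + case: (sw_cases k z) => [[Ez ->]|[[Ez ->]|[nz0 [nz1 ->]]]]; move: h1 h2 ny0 ny1 nx0 nx1; lia.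
Qed.


End Seq.

Section Perm.
Variable R : realFieldType.
Variable n : nat.
Variable p : 'I_n -> R * R.
Variable T0 : {set {set 'I_n}}.
Variable F : seq (flip n).
Variable Cs : seq {set 'I_(size F)}.
Local Notation r := (size F).
Implicit Types s : {perm 'I_r}.

Lemma size_pf s : size (permute_flips s) = r.
Proof. by rewrite size_map size_enum_ord. Qed.

Lemma nth_pf s (i : 'I_r) : nth (flip0 n) (permute_flips s) i = nth (flip0 n) F ((s^-1)%g i).
Proof. by rewrite /permute_flips (nth_map i) ?size_enum_ord // nth_ord_enum. Qed.

Lemma pf1 : permute_flips (1%g : {perm 'I_r}) = F.
Proof.
apply: (@eq_from_nth _ (flip0 n)); first by rewrite size_pf.
move=> x; rewrite size_pf => hx.
by have := nth_pf 1 (Ordinal hx); rewrite /= invg1 perm1.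
Qed.

Lemma comp_conn (i j : 'I_r) : connect (@wadj n T0 F) i j -> component T0 i = component T0 j.
Proof.
move=> w.
have sym : connect_sym (@wadj n T0 F) by apply: sym_connect_sym => x y; rewrite /wadj orbC.
apply/setP => z; rewrite !inE; apply/idP/idP => hz.
- have ji : connect (@wadj n T0 F) j i by rewrite sym.
  exact: connect_trans ji hz.
- exact: connect_trans w hz.
Qed.

Lemma adjP_adj (x y : 'I_r) : adjP T0 F x y -> adj T0 x y.
Proof.
case=> xy _ c1 c2; rewrite /adj /= xy /=; apply/andP; split.
- by case: c1 => [E|sh]; apply/orP; [left; apply/eqP | right].
- by apply/forallP => k; apply/implyP => /andP[h1 h2]; exact: c2.
Qed.

Definition Inv s := [/\ valid p T0 (permute_flips s),
  trs T0 (permute_flips s) r = trs T0 F r &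
  forall x y : 'I_r, adjP T0 (permute_flips s) x y ->
    component T0 ((s^-1)%g x) = component T0 ((s^-1)%g y)].

Lemma Inv1 : valid p T0 F -> Inv 1.
Proof.
move=> Hv; rewrite /Inv pf1; split => // x y; rewrite invg1 !perm1 => h.
by apply: comp_conn; apply: connect1; rewrite /wadj adjP_adj.
Qed.

Lemma tE (x y z : 'I_r) : val y = (val x).+1 -> val (tperm x y z) = sw x z.
Proof.
move=> hy; case: tpermP => [->|->|/eqP h1 /eqP h2].
- by rewrite /sw eqxx.
- by rewrite hy /sw (gtn_eqF (ltnSn x)) eqxx.
- have h1' : val z != val x by [].
  have h2' : val z != (val x).+1 by rewrite -hy.
  by rewrite /sw (negbTE h1') (negbTE h2').
Qed.

Lemma Inv_swap s (x y : 'I_r) : val y = (val x).+1 ->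
  component T0 ((s^-1)%g x) != component T0 ((s^-1)%g y) -> Inv s -> Inv (s * tperm x y).
Proof.
move=> hy hc; rewrite /Inv => -[Hv Htr Har].
set G := permute_flips s.
set k := val x.
have sG : size G = r by rewrite size_pf.
have kG : k.+1 < size G by rewrite sG /k -hy ltn_ord.
have kG' : k < size G by rewrite ltnW.
set A := take k G; set f := nth (flip0 n) G k; set g := nth (flip0 n) G k.+1; set B := drop k.+2 G.
have EG : G = A ++ f :: g :: B.
  by rewrite /A /f /g /B -(drop_nth (flip0 n) kG) -(drop_nth (flip0 n) kG') cat_take_drop.
have sA : size A = k by rewrite size_take kG'.
have EG' : permute_flips (s * tperm x y) = A ++ g :: f :: B.
  apply: (@eq_from_nth _ (flip0 n)); first by rewrite size_pf -sG EG !size_cat.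
  move=> z; rewrite size_pf => hz.
  rewrite nth_sw sA -EG.
  have := nth_pf (s * tperm x y) (Ordinal hz); rewrite /= => ->.
  have tz := tE (Ordinal hz) hy; rewrite /= in tz.
  by rewrite invgM tpermV permM -tz nth_pf.
have nonadj : ~ adjP T0 (A ++ f :: g :: B) (size A) (size A).+1.
  rewrite -EG sA /k -hy => h; move/eqP: hc; apply; exact: Har.
have Hv2 : valid p T0 (A ++ f :: g :: B) by rewrite -EG.
have [Hv' Htr' Har'] := swap_ok Hv2 nonadj.
split.
- by rewrite EG'.
- have sz : size (A ++ f :: g :: B) = r by rewrite -EG.
  by rewrite EG' -Htr; move: Htr'; rewrite sz -EG.
- move=> a b; rewrite EG' => h; have := Har' a b h.
  rewrite -EG sA -(tE a hy) -(tE b hy) => /Har.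
  by rewrite !invgM !tpermV !permM.
Qed.

Definition rank (i : 'I_r) := index (component T0 i) Cs.
Definition Phi s := \sum_(i : 'I_r) s i * rank i.

Lemma Phi_swap s (x y : 'I_r) : val y = (val x).+1 ->
  rank ((s^-1)%g y) < rank ((s^-1)%g x) -> Phi s < Phi (s * tperm x y).
Proof.
move=> hy hr.
set a := (s^-1)%g x; set b := (s^-1)%g y.
have xy : x != y by apply/eqP => E; move: hy; rewrite E; lia.
have ab : b != a by apply: contraNneq xy => E; rewrite -(permKV s x) -/a -E permKV.
have split2 : forall Fn : 'I_r -> nat, \sum_(i : 'I_r) Fn i =
    Fn a + (Fn b + \sum_(i | (i != a) && (i != b)) Fn i).
  by move=> Fn; rewrite (bigD1 a) // (bigD1 b) //=.
rewrite /Phi split2 [X in _ < X]split2.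
have rest : \sum_(i | (i != a) && (i != b)) s i * rank i =
            \sum_(i | (i != a) && (i != b)) (s * tperm x y)%g i * rank i.
  apply: eq_bigr => i /andP[h1 h2]; rewrite permM tpermD //.
  - by apply: contraNneq h1 => E; rewrite /a E permK.
  - by apply: contraNneq h2 => E; rewrite /b E permK.
rewrite -rest !permM /a /b !permKV tpermL tpermR hy.
move: hr; rewrite -/a -/b; set ra := rank a; set rb := rank b.
set S := \sum_(i | _) _.
rewrite (_ : val x = nat_of_ord x) //; nia.
Qed.

Lemma Phi_bound s : Phi s <= r * (r * size Cs).
Proof.
rewrite /Phi; apply: (@leq_trans (\sum_(i : 'I_r) r * size Cs)).
  by apply: leq_sum => i _; apply: leq_mul; [apply: ltnW | apply: index_size].
by rewrite sum_nat_const card_ord.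
Qed.
Definition srt s := [forall x : 'I_r, forall y : 'I_r,
  (val y == (val x).+1) ==> (rank ((s^-1)%g x) <= rank ((s^-1)%g y))].

Lemma loop m s : Inv s -> r * (r * size Cs) - Phi s <= m -> exists s', Inv s' /\ srt s'.
Proof.
elim: m s => [|m IH] s Hs Hm; (case: (boolP (srt s)) => [hs|]; first by exists s);
  move=> /forallPn [x /forallPn [y]]; rewrite negb_imply -ltnNge => /andP[/eqP hy hr];
  have hc : component T0 ((s^-1)%g x) != component T0 ((s^-1)%g y)
    by apply/eqP => E; move: hr; rewrite /rank E ltnn.
- have Hlt := Phi_swap hy hr; have Hb := Phi_bound (s * tperm x y); lia.
- apply: (IH _ (Inv_swap hy hc Hs)).
  have Hlt := Phi_swap hy hr; have Hb := Phi_bound (s * tperm x y); lia.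
Qed.

Lemma mono s : srt s -> forall d (x y : 'I_r), val y = x + d -> rank ((s^-1)%g x) <= rank ((s^-1)%g y).
Proof.
move=> hs; elim => [|d IH] x y hy.
  by have -> : y = x by apply: val_inj; rewrite hy addn0.
have hd : x + d < r by move: (ltn_ord y); rewrite hy; lia.
apply: (leq_trans (IH x (Ordinal hd) erefl)).
move/forallP: hs => /(_ (Ordinal hd)) /forallP /(_ y) /implyP; apply.
by rewrite /= hy addnS.
Qed.

Lemma rank_nth t (i : 'I_r) : uniq Cs -> (forall C, (C \in Cs) = (C \in components T0 F)) ->
  t < size Cs -> i \in nth set0 Cs t -> rank i = t.
Proof.
move=> HU HC ht hi.
have : nth set0 Cs t \in components T0 F by rewrite -HC mem_nth.
case/imsetP => k _ Ek.
rewrite Ek inE in hi.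
by rewrite /rank -(comp_conn hi) -Ek index_uniq.
Qed.
End Perm.

Theorem corollary1 (R : realFieldType) (n : nat) (p : 'I_n -> R * R)
    (T0 : {set {set 'I_n}}) (F : seq (flip n))
    (Cs : seq {set 'I_(size F)}) :
  injective p ->
  triangulation p T0 ->
  valid p T0 F ->
  uniq Cs ->
  (forall C, (C \in Cs) = (C \in components T0 F)) ->
  exists s : {perm 'I_(size F)},
    [/\ valid p T0 (permute_flips s),
        trs T0 (permute_flips s) (size F) = trs T0 F (size F)
      & forall (t u : nat) (i j : 'I_(size F)), (t < u < size Cs)%N ->
          i \in nth set0 Cs t -> j \in nth set0 Cs u -> (s i < s j)%N].
Proof.
move=> _ HT Hv HU HC.
have [s [[Hv' Htr _] hs]] := loop (Cs := Cs) (m := size F * (size F * size Cs)) (Inv1 Hv) (leq_subr _ _).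
exists s; split => // t u i j /andP[tu uC] hi hj.
rewrite ltnNge; apply/negP => hji.
have := mono hs (d := s i - s j) (x := s j) (y := s i) (esym (subnKC hji)).
rewrite !permK (rank_nth HU HC uC hj) (rank_nth HU HC (ltn_trans tu uC) hi).
by rewrite leqNgt tu.
Qed.
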